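(* Let $1\le r<N$, $r\le m$, and assume $\widehat\lambda_r>0$. Write $\epsilon=\|L_N-L_m\|_{HS}$ and suppose $$\Delta:=\frac{\lambda_r-\lambda_{r+1}}{N}>3\epsilon.$$ Then $$\|\Delta H\|_2\le\frac{4\epsilon}{\Delta-\epsilon}\le\frac{6\epsilon}{\Delta}.$$
   Context: Let $\mathcal X$ be a set and $\kappa:\mathcal X\times\mathcal X\to\mathbb R$ a positive semidefinite kernel with $\kappa(\mathbf x,\mathbf x)\le1$. Let $\mathcal H_\kappa$ be its RKHS, with inner product $\langle\cdot,\cdot\rangle$. Let $\mathcal D=\{\mathbf x_1,\ldots,\mathbf x_N\}$ and $K=[\kappa(\mathbf x_i,\mathbf x_j)]_{N\times N}$. Assume $K$ is positive definite, with eigenvalues $\lambda_1\ge\cdots\ge\lambda_N>0$ and orthonormal eigenvectors $\mathbf v_i$. Put $V_{i,j}=[(\mathbf v_1,\ldots,\mathbf v_N)]_{i,j}$. Let $\widehat{\mathbf x}_1,\ldots,\widehat{\mathbf x}_m$ be sampled uniformly from $\mathcal D$. Let $\widehat K=[\kappa(\widehat{\mathbf x}_i,\widehat{\mathbf x}_j)]_{m\times m}$, with eigenvalues $\widehat\lambda_1\ge\cdots\ge\widehat\lambda_m$ and orthonormal eigenvectors $\mathbf u_i$. Put $U_{i,j}=[(\mathbf u_1,\ldots,\mathbf u_r)]_{i,j}$. Define the operators $$L_N[f]=\frac1N\sum_{i=1}^N\kappa(\mathbf x_i,\cdot)f(\mathbf x_i),\qquad L_m[f]=\frac1m\sum_{i=1}^m\kappa(\widehat{\mathbf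 x}_i,\cdot)f(\widehat{\mathbf x}_i).$$ Define $$\varphi_j=\lambda_j^{-1/2}\sum_{i=1}^N V_{i,j}\kappa(\mathbf x_i,\cdot)\quad(j\in[N]),\qquad \widehat\varphi_j=\widehat\lambda_j^{-1/2}\sum_{i=1}^m U_{i,j}\kappa(\widehat{\mathbf x}_i,\cdot)\quad(j\le r).$$ Define $\|L\|_{HS}=\big(\sum_{i,j=1}^N\langle\varphi_i,L\varphi_j\rangle^2\big)^{1/2}$. Define $H_r[f]=\sum_{i=1}^r\varphi_i\langle\varphi_i,f\rangle$, $\widehat H_r[f]=\sum_{i=1}^r\widehat\varphi_i\langle\widehat\varphi_i,f\rangle$, and $\Delta H=H_r-\widehat H_r$. Here $\|\cdot\|_2$ is the operator norm on $\mathcal H_\kappa$. *)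

(* Defs.v *)
From Stdlib Require Import Reals.
Open Scope R_scope.

Fixpoint sumR (n : nat) (f : nat -> R) : R :=
  match n with O => 0 | S k => sumR k f + f k end.

Record InnerProductSpace := {
  car :> Type;
  vzero : car;
  vadd : car -> car -> car;
  vscal : R -> car -> car;
  inner : car -> car -> R;
  vadd_assoc : forall f g h, vadd f (vadd g h) = vadd (vadd f g) h;
  vadd_comm : forall f g, vadd f g = vadd g f;
  vadd_0 : forall f, vadd f vzero = f;
  vadd_opp : forall f, vadd f (vscal (-1) f) = vzero;
  vscal_assoc : forall a b f, vscal a (vscal b f) = vscal (a * b) f;
  vscal_1 : forall f, vscal 1 f = f;
  vscal_distr_v : forall a f g, vscal a (vadd f g) = vadd (vscal a f) (vscal a g);
  vscal_distr_s : forall a b f, vscal (a + b) f = vadd (vscal a f) (vscal b f);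
  inner_sym : forall f g, inner f g = inner g f;
  inner_add_l : forall f g h, inner (vadd f g) h = inner f h + inner g h;
  inner_scal_l : forall a f g, inner (vscal a f) g = a * inner f g;
  inner_pos : forall f, 0 <= inner f f;
  inner_def : forall f, inner f f = 0 -> f = vzero
}.
Arguments vzero {i}.
Arguments vadd {i}.
Arguments vscal {i}.
Arguments inner {i}.

Section Ops.
Variable E : InnerProductSpace.

Fixpoint vsum (n : nat) (g : nat -> E) : E :=
  match n with O => vzero | S k => vadd (vsum k g) (g k) end.

Definition vsub (f g : E) : E := vadd f (vscal (-1) g).

Definition norm (f : E) : R := sqrt (inner f f).

Definition op_norm_le (T : E -> E) (c : R) : Prop :=
  forall f, norm (T f) <= c * norm f.

Variable X : Type.
Variable Phi : X -> E.   (* Phi z plays the role of kappa(z, .) *)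

(* L[f] = 1/n sum_i kappa(z_i,.) f(z_i),  with f(z_i) = <f, kappa(z_i,.)> *)
Definition L_op (n : nat) (z : nat -> X) (f : E) : E :=
  vscal (/ INR n) (vsum n (fun i => vscal (inner f (Phi (z i))) (Phi (z i)))).

Definition eigfun (n : nat) (z : nat -> X) (lam : nat -> R) (V : nat -> nat -> R)
  (j : nat) : E :=
  vscal (/ sqrt (lam j)) (vsum n (fun i => vscal (V i j) (Phi (z i)))).

Definition proj_op (phi : nat -> E) (r : nat) (f : E) : E :=
  vsum r (fun i => vscal (inner (phi i) f) (phi i)).

Definition hs_norm (phi : nat -> E) (n : nat) (T : E -> E) : R :=
  sqrt (sumR n (fun i => sumR n (fun j => (inner (phi i) (T (phi j))) ^ 2))).
End Ops.
Arguments vsum {E}. Arguments vsub {E}. Arguments norm {E}.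
Arguments op_norm_le {E}. Arguments L_op {E X}. Arguments eigfun {E X}.
Arguments proj_op {E}. Arguments hs_norm {E}.

Definition psd_kernel {X : Type} (k : X -> X -> R) : Prop :=
  forall (n : nat) (z : nat -> X) (c : nat -> R),
    0 <= sumR n (fun i => sumR n (fun j => c i * c j * k (z i) (z j))).

Definition gram {X : Type} (k : X -> X -> R) (z : nat -> X) : nat -> nat -> R :=
  fun i j => k (z i) (z j).

Definition pos_def (n : nat) (A : nat -> nat -> R) : Prop :=
  forall c : nat -> R, (exists i, (i < n)%nat /\ c i <> 0) ->
    0 < sumR n (fun i => sumR n (fun j => c i * A i j * c j)).

(* lam_0 >= ... >= lam_{n-1} are the eigenvalues of the n x n matrix A, with
   orthonormal eigenvectors v_j = (V 0 j, ..., V (n-1) j). *)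
Definition sorted_eigendecomp (n : nat) (A : nat -> nat -> R)
  (lam : nat -> R) (V : nat -> nat -> R) : Prop :=
  (forall i j, (i < n)%nat -> (j < n)%nat ->
     sumR n (fun k => V k i * V k j) = if Nat.eqb i j then 1 else 0) /\
  (forall i j, (i < n)%nat -> (j < n)%nat ->
     sumR n (fun k => A i k * V k j) = lam j * V i j) /\
  (forall i j, (i <= j)%nat -> (j < n)%nat -> lam j <= lam i).

(* Main.v *)
Require Import Defs.
From Stdlib Require Import Reals Lia Lra Classical.
From mathcomp Require all_boot all_algebra Rstruct.
Open Scope R_scope.

Module MX.
Import all_boot all_algebra Rstruct.
Import GRing.Theory.

Lemma sumR_big n (f : nat -> R) : sumR n f = (\sum_(i < n) f i)%R.
Proof.
Local Open Scope ring_scope.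
elim: n => [|n IH] /=; first by rewrite big_ord0.
by rewrite big_ord_recr /= IH.
Qed.

Lemma rows_orth (n : nat) (V : nat -> nat -> R) :
  (forall i j, (i < n)%coq_nat -> (j < n)%coq_nat ->
     sumR n (fun k => V k i * V k j) = if Nat.eqb i j then 1 else 0) ->
  forall i j, (i < n)%coq_nat -> (j < n)%coq_nat ->
     sumR n (fun k => V i k * V j k) = if Nat.eqb i j then 1 else 0.
Proof.
Local Open Scope ring_scope.
move=> H i j hi hj.
pose A : 'M[R]_n := \matrix_(a < n, b < n) V a b.
have h1 : (A^T *m A = 1%:M).
  apply/matrixP => a b; rewrite !mxE.
  have := H a b (ltP (ltn_ord a)) (ltP (ltn_ord b)).
  rewrite sumR_big => E.
  transitivity (\sum_(k < n) V k a * V k b).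
    by apply: eq_bigr => k _; rewrite !mxE.
  rewrite E; case: (Nat.eqb_spec a b) => [/val_inj ->|ne]; first by rewrite eqxx.
  by case: eqP => // ab; case: ne; rewrite ab.
have h2 := mulmx1C h1.
pose x := Ordinal (introT ltP hi). pose y := Ordinal (introT ltP hj).
have := f_equal (fun M : 'M[R]_n => M x y) h2.
rewrite /= !mxE => E.
have -> : sumR n (fun k => V i k * V j k) = \sum_(k < n) A x k * A^T k y.
  by rewrite sumR_big; apply: eq_bigr => k _; rewrite !mxE.
rewrite E; case: (Nat.eqb_spec i j) => ne.
  by have -> : (x == y) = true by apply/eqP; apply: val_inj; exact ne.
by have -> : (x == y) = false by apply/eqP => h; apply: ne; exact (f_equal val h).
Qed.
End MX.
Lemma foo (a b : nat) : (a <= b)%nat -> True. intros H. rewrite <- (Nat.add_0_r a) in H. exact I. Qed.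
Lemma rows_orth (n : nat) (V : nat -> nat -> R) :
  (forall i j, (i < n)%nat -> (j < n)%nat ->
     sumR n (fun k => V k i * V k j) = if Nat.eqb i j then 1 else 0) ->
  forall i j, (i < n)%nat -> (j < n)%nat ->
     sumR n (fun k => V i k * V j k) = if Nat.eqb i j then 1 else 0.
Proof. exact (MX.rows_orth n V). Qed.

Lemma sumR_ext n f g : (forall i, (i < n)%nat -> f i = g i) -> sumR n f = sumR n g.
Proof.
  induction n as [|n IH]; intros H; simpl; [reflexivity|].
  rewrite IH by (intros; apply H; lia). rewrite (H n) by lia. reflexivity.
Qed.

Lemma sumR_plus n f g : sumR n (fun i => f i + g i) = sumR n f + sumR n g.
Proof. induction n as [|n IH]; simpl; [ring|rewrite IH; ring]. Qed.

Lemma sumR_minus n f g : sumR n (fun i => f i - g i) = sumR n f - sumR n g.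
Proof. induction n as [|n IH]; simpl; [ring|rewrite IH; ring]. Qed.

Lemma sumR_mult_l n c f : sumR n (fun i => c * f i) = c * sumR n f.
Proof. induction n as [|n IH]; simpl; [ring|rewrite IH; ring]. Qed.

Lemma sumR_mult_r n c f : sumR n (fun i => f i * c) = sumR n f * c.
Proof. induction n as [|n IH]; simpl; [ring|rewrite IH; ring]. Qed.

Lemma sumR_zero n : sumR n (fun _ => 0) = 0.
Proof. induction n as [|n IH]; simpl; [ring|rewrite IH; ring]. Qed.

Lemma sumR_swap n m f :
  sumR n (fun i => sumR m (fun j => f i j)) = sumR m (fun j => sumR n (fun i => f i j)).
Proof.
  induction n as [|n IH]; simpl.
  - rewrite sumR_zero. reflexivity.
  - rewrite IH, <- sumR_plus. reflexivity.
Qed.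

Lemma sumR_le n f g : (forall i, (i < n)%nat -> f i <= g i) -> sumR n f <= sumR n g.
Proof.
  induction n as [|n IH]; intros H; simpl; [lra|].
  apply Rplus_le_compat; [apply IH; intros; apply H; lia| apply H; lia].
Qed.

Lemma sumR_nonneg n f : (forall i, (i < n)%nat -> 0 <= f i) -> 0 <= sumR n f.
Proof. intros H. rewrite <- (sumR_zero n). apply sumR_le. exact H. Qed.

Lemma sumR_mono n m f : (n <= m)%nat -> (forall i, (i < m)%nat -> 0 <= f i) ->
  sumR n f <= sumR m f.
Proof.
  intros Hnm H. induction Hnm as [|m Hnm IH]; [lra|].
  simpl. assert (0 <= f m) by (apply H; lia).
  assert (sumR n f <= sumR m f) by (apply IH; intros; apply H; lia). lra.
Qed.

Lemma sumR_single n f j : (j < n)%nat -> (forall l, (l < n)%nat -> l <> j -> f l = 0) ->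
  sumR n f = f j.
Proof.
  induction n as [|n IH]; intros Hj H; [lia|]. simpl.
  destruct (Nat.eq_dec j n) as [->|ne].
  - rewrite (sumR_ext n f (fun _ => 0)) by (intros; apply H; lia).
    rewrite sumR_zero. ring.
  - rewrite IH by (try lia; intros; apply H; lia). rewrite (H n) by lia. ring.
Qed.

Lemma sumR_delta n f j : (j < n)%nat ->
  sumR n (fun k => f k * (if Nat.eqb k j then 1 else 0)) = f j.
Proof.
  intros Hj. rewrite (sumR_single n _ j Hj).
  - rewrite Nat.eqb_refl. ring.
  - intros l _ ne. apply Nat.eqb_neq in ne. rewrite ne. ring.
Qed.

Lemma sumR_delta' n f j : (j < n)%nat ->
  sumR n (fun k => f k * (if Nat.eqb j k then 1 else 0)) = f j.
Proof.
  intros Hj. rewrite <- (sumR_delta n f j Hj). apply sumR_ext. intros.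
  rewrite Nat.eqb_sym. reflexivity.
Qed.

Lemma sumR_sq n f : (sumR n f)^2 = sumR n (fun j => sumR n (fun l => f j * f l)).
Proof.
  rewrite (sumR_ext n (fun j => sumR n (fun l => f j * f l)) (fun j => f j * sumR n f)).
  - rewrite sumR_mult_r. ring.
  - intros. apply sumR_mult_l.
Qed.

Lemma quad_disc (A B C : R) : 0 <= A -> (forall t, 0 <= A * t^2 + 2 * B * t + C) -> B^2 <= A * C.
Proof.
  intros HA H. destruct (Req_dec A 0) as [A0|A0].
  - subst A. destruct (Req_dec B 0) as [B0|B0]; [subst; nra|].
    specialize (H (-(C+1)/(2*B))). exfalso.
    replace (0 * (- (C + 1) / (2 * B)) ^ 2 + 2 * B * (- (C + 1) / (2 * B)) + C) with (-1) in H
      by (field; exact B0). lra.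
  - specialize (H (-B/A)).
    replace (A * (- B / A) ^ 2 + 2 * B * (- B / A) + C) with (C - B^2/A) in H by (field; exact A0).
    assert (0 < A) by lra.
    assert (B^2/A <= C) by lra.
    apply (Rmult_le_compat_l A) in H1; [|lra].
    replace (A * (B^2/A)) with (B^2) in H1 by (field; lra). lra.
Qed.

Lemma sumR_CS n f g :
  (sumR n (fun i => f i * g i))^2 <= sumR n (fun i => f i ^2) * sumR n (fun i => g i ^2).
Proof.
  apply quad_disc.
  - apply sumR_nonneg. intros. nra.
  - intros t. 
    assert (E : sumR n (fun i => f i ^ 2) * t ^ 2 + 2 * sumR n (fun i => f i * g i) * t +
      sumR n (fun i => g i ^ 2) = sumR n (fun i => (f i * t + g i)^2)).

    { rewrite (sumR_ext n (fun i => (f i * t + g i)^2)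
        (fun i => (t^2 * f i ^2 + (2*t) * (f i * g i)) + g i ^2)) by (intros; ring).
      rewrite !sumR_plus, !sumR_mult_l. ring. }
    rewrite E. apply sumR_nonneg. intros. apply pow2_ge_0.
Qed.

Section Vec.
Variable E : InnerProductSpace.
Implicit Types u v w f g h : E.

Lemma inner_add_r u v w : inner u (vadd v w) = inner u v + inner u w.
Proof. rewrite inner_sym, inner_add_l, (inner_sym _ v), (inner_sym _ w). reflexivity. Qed.

Lemma inner_scal_r a u v : inner u (vscal a v) = a * inner u v.
Proof. rewrite inner_sym, inner_scal_l, inner_sym. reflexivity. Qed.

Lemma inner_zero_l h : inner (@vzero E) h = 0.
Proof.
  assert (H : inner (@vzero E) h = inner (vadd vzero vzero) h) by (rewrite vadd_0; reflexivity).
  rewrite inner_add_l in H. lra.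
Qed.

Lemma inner_vsum_l n (g : nat -> E) h : inner (vsum n g) h = sumR n (fun i => inner (g i) h).
Proof.
  induction n as [|n IH]; simpl; [apply inner_zero_l|].
  rewrite inner_add_l, IH. reflexivity.
Qed.

Lemma inner_vsub_l u v h : inner (vsub u v) h = inner u h - inner v h.
Proof. unfold vsub. rewrite inner_add_l, inner_scal_l. ring. Qed.

Lemma inner_vsub_r u v h : inner h (vsub u v) = inner h u - inner h v.
Proof. rewrite inner_sym, inner_vsub_l, !(inner_sym _ h). reflexivity. Qed.

Lemma inner_lin_l n (c : nat -> R) (g : nat -> E) h :
  inner (vsum n (fun i => vscal (c i) (g i))) h = sumR n (fun i => c i * inner (g i) h).
Proof. rewrite inner_vsum_l. apply sumR_ext. intros. apply inner_scal_l. Qed.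

Lemma inner_lin_r n (c : nat -> R) (g : nat -> E) h :
  inner h (vsum n (fun i => vscal (c i) (g i))) = sumR n (fun i => c i * inner h (g i)).
Proof.
  rewrite inner_sym, inner_lin_l. apply sumR_ext. intros. rewrite inner_sym. reflexivity.
Qed.

Lemma inner_CS u v : (inner u v)^2 <= inner u u * inner v v.
Proof.
  apply quad_disc; [apply inner_pos|]. intros t.
  pose proof (inner_pos _ (vadd (vscal t u) v)) as H.
  rewrite inner_add_l, !inner_add_r, !inner_scal_l, !inner_scal_r, (inner_sym _ v u) in H.
  nra.
Qed.

Lemma proj_expand n (c : nat -> R) (hh : nat -> E) u :
  (forall j l, (j < n)%nat -> (l < n)%nat -> j <> l -> inner (hh j) (hh l) = 0) ->
  let y := vsub u (vsum n (fun j => vscal (c j) (hh j))) in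
  inner y y = inner u u - 2 * sumR n (fun j => c j * inner (hh j) u)
              + sumR n (fun j => c j ^ 2 * inner (hh j) (hh j)).
Proof.
  intros Horth y. unfold y.
  rewrite inner_vsub_l, !inner_vsub_r, !inner_lin_l.
  rewrite (sumR_ext n (fun i => c i * inner (hh i) (vsum n (fun j => vscal (c j) (hh j))))
            (fun i => c i ^ 2 * inner (hh i) (hh i))).
  - rewrite inner_lin_r.
    rewrite (sumR_ext n (fun j => c j * inner u (hh j)) (fun j => c j * inner (hh j) u))
      by (intros; rewrite inner_sym; reflexivity). ring.
  - intros i Hi. rewrite inner_lin_r.
    rewrite (sumR_single n _ i Hi).
    + ring.
    + intros l Hl ne. rewrite Horth by auto. ring.
Qed.

Lemma bessel_orth n (hh : nat -> E) (M : R) w :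
  0 < M ->
  (forall j l, (j < n)%nat -> (l < n)%nat -> j <> l -> inner (hh j) (hh l) = 0) ->
  (forall j, (j < n)%nat -> inner (hh j) (hh j) <= M) ->
  sumR n (fun j => (inner (hh j) w)^2) <= M * inner w w.
Proof.
  intros HM Horth Hb.
  pose proof (proj_expand n (fun j => inner (hh j) w / M) hh w Horth) as H. cbv zeta in H.
  pose proof (inner_pos _ (vsub w (vsum n (fun j => vscal (inner (hh j) w / M) (hh j))))) as P.
  rewrite H in P. clear H.
  set (S := sumR n (fun j => (inner (hh j) w)^2)).
  assert (E1 : sumR n (fun j => inner (hh j) w / M * inner (hh j) w) = S / M).
  { unfold S, Rdiv. rewrite <- sumR_mult_r. apply sumR_ext. intros. ring. }
  assert (E2 : sumR n (fun j => (inner (hh j) w / M) ^ 2 * inner (hh j) (hh j)) <= S / M).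
  { unfold S. unfold Rdiv at 2. rewrite <- sumR_mult_r. apply sumR_le. intros j Hj.
    specialize (Hb j Hj).
    assert (0 <= (inner (hh j) w)^2) by apply pow2_ge_0.
    replace ((inner (hh j) w / M) ^ 2 * inner (hh j) (hh j)) with
      ((inner (hh j) w)^2 * / M * (inner (hh j) (hh j) / M)) by (field; lra).
    rewrite <- (Rmult_1_r ((inner (hh j) w)^2 * / M)) at 2.
    apply Rmult_le_compat_l.
    - apply Rmult_le_pos; [lra| left; apply Rinv_0_lt_compat; lra].
    - apply (Rmult_le_reg_r M); [lra|]. unfold Rdiv. rewrite Rmult_assoc, Rinv_l; lra. }
  rewrite E1 in P.
  assert (S / M <= inner w w) by lra.
  apply (Rmult_le_compat_l M) in H; [|lra].
  replace (M * (S / M)) with S in H by (field; lra). exact H.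
Qed.

Lemma orthonormal_proj n (e : nat -> E) u :
  (forall j l, (j < n)%nat -> (l < n)%nat -> inner (e j) (e l) = if Nat.eqb j l then 1 else 0) ->
  let y := vsub u (vsum n (fun j => vscal (inner (e j) u) (e j))) in
  inner y y = inner u u - sumR n (fun j => (inner (e j) u)^2).
Proof.
  intros Hon y. unfold y. rewrite proj_expand.
  - rewrite (sumR_ext n (fun j => inner (e j) u ^ 2 * inner (e j) (e j)) (fun j => (inner (e j) u)^2)).
    + rewrite (sumR_ext n (fun j => inner (e j) u * inner (e j) u) (fun j => (inner (e j) u)^2))
        by (intros; ring). ring.
    + intros j Hj. rewrite Hon, Nat.eqb_refl by auto. ring.
  - intros j l Hj Hl ne. rewrite Hon by auto. apply Nat.eqb_neq in ne. rewrite ne. reflexivity.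
Qed.

Lemma bessel_on n (e : nat -> E) u :
  (forall j l, (j < n)%nat -> (l < n)%nat -> inner (e j) (e l) = if Nat.eqb j l then 1 else 0) ->
  sumR n (fun j => (inner (e j) u)^2) <= inner u u.
Proof.
  intros Hon. pose proof (orthonormal_proj n e u Hon) as H. cbv zeta in H.
  pose proof (inner_pos _ (vsub u (vsum n (fun j => vscal (inner (e j) u) (e j))))). lra.
Qed.

End Vec.

Lemma L_form (E : InnerProductSpace) (X : Type) (Phi : X -> E) n z (f h : E) :
  inner (L_op Phi n z f) h = / INR n * sumR n (fun i => inner f (Phi (z i)) * inner (Phi (z i)) h).
Proof.
  unfold L_op. rewrite inner_scal_l, inner_vsum_l. f_equal. apply sumR_ext. intros.
  apply inner_scal_l.
Qed.

Lemma proj_form (E : InnerProductSpace) (e : nat -> E) r (f h : E) :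
  inner (proj_op e r f) h = sumR r (fun i => inner (e i) f * inner (e i) h).
Proof. unfold proj_op. apply inner_lin_l. Qed.

Lemma inner_zero_r (E : InnerProductSpace) (h : E) : inner h vzero = 0.
Proof. rewrite inner_sym. apply inner_zero_l. Qed.

Lemma col_quad n (V : nat -> nat -> R) (c : nat -> R) :
  (forall i j, (i < n)%nat -> (j < n)%nat ->
     sumR n (fun k => V k i * V k j) = if Nat.eqb i j then 1 else 0) ->
  sumR n (fun i => (sumR n (fun j => V i j * c j))^2) = sumR n (fun j => (c j)^2).
Proof.
  intros Hc.
  rewrite (sumR_ext n _ (fun i => sumR n (fun j => sumR n (fun l => V i j * c j * (V i l * c l)))))
    by (intros; apply sumR_sq).
  rewrite sumR_swap.
  apply sumR_ext. intros j Hj.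
  rewrite sumR_swap.
  rewrite (sumR_ext n _ (fun l => c j * c l * (if Nat.eqb j l then 1 else 0))).
  - rewrite (sumR_delta' n (fun l => c j * c l) j Hj). ring.
  - intros l Hl. rewrite <- (Hc j l Hj Hl), <- sumR_mult_l. apply sumR_ext. intros. ring.
Qed.

Section Fam.
Variables (X : Type) (kappa : X -> X -> R) (E : InnerProductSpace) (Phi : X -> E).
Hypothesis hPhi : forall a b, inner (Phi a) (Phi b) = kappa a b.
Variables (n : nat) (z : nat -> X) (lam : nat -> R) (V : nat -> nat -> R).
Hypothesis Hdec : sorted_eigendecomp n (gram kappa z) lam V.

Let e := eigfun Phi n z lam V.

Lemma Hcol : forall i j, (i < n)%nat -> (j < n)%nat ->
     sumR n (fun k => V k i * V k j) = if Nat.eqb i j then 1 else 0.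
Proof. destruct Hdec as [H _]. exact H. Qed.

Lemma Hrow : forall i j, (i < n)%nat -> (j < n)%nat ->
     sumR n (fun k => V i k * V j k) = if Nat.eqb i j then 1 else 0.
Proof. apply rows_orth. exact Hcol. Qed.

Lemma F1 i j : (i < n)%nat -> (j < n)%nat ->
  sumR n (fun p => V p j * inner (Phi (z p)) (Phi (z i))) = lam j * V i j.
Proof.
  intros Hi Hj. destruct Hdec as [_ [He _]]. rewrite <- (He i j Hi Hj).
  apply sumR_ext. intros p Hp. unfold gram. rewrite <- hPhi, inner_sym. ring.
Qed.

Lemma eig_inner j h : inner (e j) h = / sqrt (lam j) * sumR n (fun p => V p j * inner (Phi (z p)) h).
Proof. unfold e, eigfun. rewrite inner_scal_l, inner_lin_l. reflexivity. Qed.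

Lemma F2 j i : (j < n)%nat -> (i < n)%nat -> 0 < lam j ->
  inner (e j) (Phi (z i)) = sqrt (lam j) * V i j.
Proof.
  intros Hj Hi Hl. rewrite eig_inner, F1 by auto.
  pose proof (sqrt_lt_R0 _ Hl). pose proof (sqrt_sqrt (lam j)) as Hs.
  set (s := sqrt (lam j)) in *. rewrite <- Hs by lra. field. lra.
Qed.

Lemma F3 l j : (l < n)%nat -> (j < n)%nat -> 0 < lam l -> 0 < lam j ->
  inner (e l) (e j) = if Nat.eqb l j then 1 else 0.
Proof.
  intros Hl Hj Pl Pj. rewrite eig_inner.
  rewrite (sumR_ext n _ (fun p => sqrt (lam j) * (V p l * V p j))).
  - rewrite sumR_mult_l, Hcol by auto.
    destruct (Nat.eqb_spec l j) as [->|ne].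
    + pose proof (sqrt_lt_R0 _ Pj). field. lra.
    + ring.
  - intros p Hp. rewrite inner_sym, F2 by auto. ring.
Qed.

Lemma F4 j h : (j < n)%nat -> 0 < lam j ->
  inner (L_op Phi n z (e j)) h = lam j / INR n * inner (e j) h.
Proof.
  intros Hj Pj. rewrite L_form, eig_inner.
  rewrite (sumR_ext n _ (fun i => sqrt (lam j) * (V i j * inner (Phi (z i)) h)))
    by (intros; rewrite F2 by auto; ring).
  rewrite sumR_mult_l.
  pose proof (sqrt_lt_R0 _ Pj). pose proof (sqrt_sqrt (lam j)) as Hs.
  set (s := sqrt (lam j)) in *. rewrite <- Hs by lra. unfold Rdiv.
  assert (Hn : INR n <> 0) by (apply not_0_INR; lia).
  field. repeat split; first [exact Hn | lra].
Qed.

Lemma F5 i h : (i < n)%nat ->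
  inner (Phi (z i)) h = sumR n (fun j => V i j * sumR n (fun p => V p j * inner (Phi (z p)) h)).
Proof.
  intros Hi.
  rewrite (sumR_ext n _ (fun j => sumR n (fun p => V i j * V p j * inner (Phi (z p)) h))).
  - rewrite sumR_swap.
    rewrite (sumR_ext n _ (fun p => inner (Phi (z p)) h * (if Nat.eqb i p then 1 else 0))).
    + rewrite sumR_delta' by auto. reflexivity.
    + intros p Hp. rewrite <- (Hrow i p Hi Hp), <- sumR_mult_l. apply sumR_ext. intros. ring.
  - intros j Hj. rewrite <- sumR_mult_l. apply sumR_ext. intros. ring.
Qed.

Let g j := vsum n (fun p => vscal (V p j) (Phi (z p))).

Lemma g_inner j w : inner (g j) w = sumR n (fun p => V p j * inner (Phi (z p)) w).
Proof. unfold g. apply inner_lin_l. Qed.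

Lemma g_orth l j : (l < n)%nat -> (j < n)%nat ->
  inner (g l) (g j) = lam j * (if Nat.eqb l j then 1 else 0).
Proof.
  intros Hl Hj. rewrite g_inner.
  rewrite (sumR_ext n _ (fun p => lam j * (V p l * V p j))).
  - rewrite sumR_mult_l, Hcol by auto. reflexivity.
  - intros p Hp. unfold g. rewrite inner_lin_r.
    rewrite (sumR_ext n _ (fun q => V q j * inner (Phi (z q)) (Phi (z p))))
      by (intros; rewrite inner_sym; reflexivity).
    rewrite F1 by auto. ring.
Qed.

Lemma F6 w : sumR n (fun i => (inner w (Phi (z i)))^2) = sumR n (fun j => (inner (g j) w)^2).
Proof.
  rewrite (sumR_ext n _ (fun i => (sumR n (fun j => V i j * inner (g j) w))^2)).
  - apply col_quad. exact Hcol.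
  - intros i Hi. rewrite inner_sym, F5 by auto. f_equal. apply sumR_ext. intros. rewrite g_inner.
    reflexivity.
Qed.

Lemma F7 r M w : 0 < M ->
  (forall j, (j < n)%nat -> (r <= j)%nat -> lam j <= M) ->
  (forall j, (j < n)%nat -> (j < r)%nat -> 0 < lam j) ->
  (forall j, (j < n)%nat -> (j < r)%nat -> inner (e j) w = 0) ->
  sumR n (fun i => (inner w (Phi (z i)))^2) <= M * inner w w.
Proof.
  intros HM Hb Hp Ho. rewrite F6.
  set (hh := fun j => if Nat.ltb j r then vzero else g j).
  rewrite (sumR_ext n _ (fun j => (inner (hh j) w)^2)).
  - apply bessel_orth; auto.
    + intros j l Hj Hl ne. unfold hh.
      destruct (Nat.ltb j r); [apply inner_zero_l|].
      destruct (Nat.ltb l r); [apply inner_zero_r|].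
      rewrite g_orth by auto. apply Nat.eqb_neq in ne. rewrite ne. ring.
    + intros j Hj. unfold hh. destruct (Nat.ltb_spec j r).
      * rewrite inner_zero_l. lra.
      * rewrite g_orth, Nat.eqb_refl by auto. rewrite Rmult_1_r. apply Hb; auto.
  - intros j Hj. unfold hh. destruct (Nat.ltb_spec j r); [|reflexivity].
    rewrite inner_zero_l.
    specialize (Ho j Hj H). rewrite eig_inner, <- g_inner in Ho.
    specialize (Hp j Hj H). pose proof (sqrt_lt_R0 _ Hp).
    assert (inner (g j) w = 0).
    { apply (Rmult_eq_reg_l (/ sqrt (lam j))); [rewrite Ho; ring|].
      apply Rinv_neq_0_compat. lra. }
    rewrite H1. ring.
Qed.

Lemma F8 i h : (forall l, (l < n)%nat -> 0 < lam l) -> (i < n)%nat ->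
  inner (Phi (z i)) h = sumR n (fun l => inner (e l) (Phi (z i)) * inner (e l) h).
Proof.
  intros Hp Hi. rewrite F5 by auto. apply sumR_ext. intros l Hl.
  rewrite F2, eig_inner by auto. specialize (Hp l Hl). pose proof (sqrt_lt_R0 _ Hp).
  field. lra.
Qed.

Lemma lam_pos j : pos_def n (gram kappa z) -> (j < n)%nat -> 0 < lam j.
Proof.
  intros Hpd Hj.
  assert (Hex : exists i, (i < n)%nat /\ V i j <> 0).
  { apply NNPP. intros Hn.
    pose proof (Hcol j j Hj Hj) as H1. rewrite Nat.eqb_refl in H1.
    rewrite (sumR_ext n _ (fun _ => 0)) in H1.
    - rewrite sumR_zero in H1. lra.
    - intros k Hk. destruct (Req_dec (V k j) 0) as [->|ne]; [ring|].
      exfalso. apply Hn. exists k. auto. }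
  specialize (Hpd (fun i => V i j) Hex). simpl in Hpd.
  destruct Hdec as [_ [He _]].
  rewrite (sumR_ext n _ (fun i => lam j * (V i j * V i j))) in Hpd.
  - rewrite sumR_mult_l, Hcol, Nat.eqb_refl in Hpd by auto. lra.
  - intros i Hi. rewrite <- (Rmult_assoc (lam j)), (Rmult_comm (lam j)), Rmult_assoc, <- (He i j Hi Hj).
    rewrite <- sumR_mult_l. apply sumR_ext. intros. ring.
Qed.

End Fam.

Section Sin.
Variables (E : InnerProductSpace) (X : Type) (Phi : X -> E).

Lemma L_lin_form n z r (psi : nat -> E) d phi h :
  inner (L_op Phi n z (vsub phi (vsum r (fun j => vscal (d j) (psi j))))) h =
  inner (L_op Phi n z phi) h - sumR r (fun j => d j * inner (L_op Phi n z (psi j)) h).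
Proof.
  rewrite !L_form.
  rewrite (sumR_ext r _ (fun j => / INR n * (d j * sumR n (fun i => inner (psi j) (Phi (z i)) * inner (Phi (z i)) h))))
    by (intros; rewrite L_form; ring).
  rewrite sumR_mult_l.
  assert (S1 : sumR n (fun i => inner (vsub phi (vsum r (fun j => vscal (d j) (psi j)))) (Phi (z i)) * inner (Phi (z i)) h)
    = sumR n (fun i => inner phi (Phi (z i)) * inner (Phi (z i)) h - sumR r (fun j => d j * inner (psi j) (Phi (z i)) * inner (Phi (z i)) h))).
  { apply sumR_ext. intros i Hi. rewrite inner_vsub_l, inner_lin_l, Rmult_minus_distr_r, <- sumR_mult_r.
    reflexivity. }
  rewrite S1, sumR_minus, sumR_swap.
  rewrite (sumR_ext r (fun j => sumR n (fun i => d j * inner (psi j) (Phi (z i)) * inner (Phi (z i)) h))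
     (fun j => d j * sumR n (fun i => inner (psi j) (Phi (z i)) * inner (Phi (z i)) h))).
  - ring.
  - intros. rewrite <- sumR_mult_l. apply sumR_ext. intros. ring.
Qed.

Lemma sintheta n z r (psi : nat -> E) (c : nat -> R) phi alpha t gamma delta :
  (forall j l, (j < r)%nat -> (l < r)%nat -> inner (psi j) (psi l) = if Nat.eqb j l then 1 else 0) ->
  (forall j h, (j < r)%nat -> inner (L_op Phi n z (psi j)) h = c j * inner (psi j) h) ->
  (forall h, inner (L_op Phi n z phi) h = alpha * inner phi h + inner t h) ->
  (forall w, (forall j, (j < r)%nat -> inner (psi j) w = 0) ->
     inner (L_op Phi n z w) w <= gamma * inner w w) ->
  0 < delta -> delta <= alpha - gamma ->
  delta ^ 2 * inner (vsub phi (vsum r (fun j => vscal (inner (psi j) phi) (psi j))))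
                    (vsub phi (vsum r (fun j => vscal (inner (psi j) phi) (psi j))))
  <= inner t t.
Proof.
  intros Hon Hc Hphi Hcomp Hd Hag.
  set (w := vsub phi (vsum r (fun j => vscal (inner (psi j) phi) (psi j)))).
  assert (Hw : forall j, (j < r)%nat -> inner (psi j) w = 0).
  { intros j Hj. unfold w. rewrite inner_vsub_r, inner_lin_r.
    rewrite (sumR_ext r _ (fun l => inner (psi l) phi * (if Nat.eqb j l then 1 else 0)))
      by (intros; rewrite Hon by auto; reflexivity).
    rewrite sumR_delta' by auto. ring. }
  assert (Hww : inner w w = inner phi w).
  { unfold w at 1. rewrite inner_vsub_l, inner_lin_l.
    rewrite (sumR_ext r _ (fun _ => 0)) by (intros; rewrite Hw by auto; ring).
    rewrite sumR_zero. ring. }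
  assert (HL : inner (L_op Phi n z w) w = alpha * inner w w + inner t w).
  { unfold w at 1. rewrite L_lin_form, Hphi.
    rewrite (sumR_ext r _ (fun _ => 0)) by (intros; rewrite Hc, Hw by auto; ring).
    rewrite sumR_zero, Hww. ring. }
  pose proof (Hcomp w Hw) as Hcw. rewrite HL in Hcw.
  pose proof (inner_pos _ w) as Pw. pose proof (inner_pos _ t) as Pt.
  pose proof (inner_CS _ t w) as CS.
  assert (H1 : delta * inner w w <= - inner t w) by nra.
  destruct (Req_dec (inner w w) 0) as [Z|NZ].
  - rewrite Z. lra.
  - assert (Pw' : 0 < inner w w) by lra.
    assert (H2 : (delta * inner w w)^2 <= (inner t w)^2).
    { assert (0 <= delta * inner w w) by nra. nra. }
    apply (Rmult_le_reg_r (inner w w)); [exact Pw'|]. nra.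
Qed.

End Sin.

Section Gen.
Variable E : InnerProductSpace.

Definition onr (r : nat) (e : nat -> E) : Prop :=
  forall j l, (j < r)%nat -> (l < r)%nat -> inner (e j) (e l) = if Nat.eqb j l then 1 else 0.

Definition resid (r : nat) (psi : nat -> E) (u : E) : E :=
  vsub u (vsum r (fun j => vscal (inner (psi j) u) (psi j))).

Lemma resid_norm r psi u : onr r psi ->
  inner (resid r psi u) (resid r psi u) = inner u u - sumR r (fun j => (inner (psi j) u)^2).
Proof. intros H. unfold resid. apply (orthonormal_proj E r psi u H). Qed.

Lemma FG_eq r (e psi : nat -> E) : onr r e -> onr r psi ->
  sumR r (fun k => inner (resid r psi (e k)) (resid r psi (e k))) =
  sumR r (fun j => inner (resid r e (psi j)) (resid r e (psi j))).
Proof.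
  intros He Hp.
  rewrite (sumR_ext r _ (fun k => 1 - sumR r (fun j => (inner (psi j) (e k))^2))).
  - rewrite (sumR_ext r (fun j => inner (resid r e (psi j)) (resid r e (psi j)))
                        (fun j => 1 - sumR r (fun k => (inner (psi j) (e k))^2))).
    + rewrite !sumR_minus, sumR_swap. reflexivity.
    + intros j Hj. rewrite resid_norm, Hp, Nat.eqb_refl by auto. f_equal.
      apply sumR_ext. intros. rewrite inner_sym. reflexivity.
  - intros k Hk. rewrite resid_norm, He, Nat.eqb_refl by auto. reflexivity.
Qed.

Lemma final_bound r (e psi : nat -> E) f : onr r e -> onr r psi ->
  let F2 := sumR r (fun k => inner (resid r psi (e k)) (resid r psi (e k))) in
  let D := vsub (proj_op e r f) (proj_op psi r f) in
  inner D D <= 4 * F2 * inner f f.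
Proof.
  intros He Hp F2 D.
  set (w k := resid r psi (e k)). set (v j := resid r e (psi j)).
  set (Xv := vsum r (fun k => vscal (inner (w k) f) (e k))).
  set (Yv := vsum r (fun j => vscal (inner (psi j) f) (v j))).
  assert (HD : forall h, inner D h = inner Xv h - inner Yv h).
  { intros h. unfold D, Xv, Yv. rewrite inner_vsub_l, !proj_form, !inner_lin_l.
    unfold w, v, resid.
    rewrite (sumR_ext r (fun i => inner (vsub (e i) (vsum r (fun j => vscal (inner (psi j) (e i)) (psi j)))) f * inner (e i) h)
      (fun i => inner (e i) f * inner (e i) h - sumR r (fun j => inner (psi j) (e i) * inner (psi j) f * inner (e i) h))).
    2:{ intros i Hi. rewrite inner_vsub_l, inner_lin_l, Rmult_minus_distr_r, <- sumR_mult_r. reflexivity. }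
    rewrite (sumR_ext r (fun i => inner (psi i) f * inner (vsub (psi i) (vsum r (fun j => vscal (inner (e j) (psi i)) (e j)))) h)
      (fun i => inner (psi i) f * inner (psi i) h - sumR r (fun j => inner (psi i) f * inner (e j) (psi i) * inner (e j) h))).
    2:{ intros i Hi. rewrite inner_vsub_l, inner_lin_l, Rmult_minus_distr_l, <- sumR_mult_l.
        f_equal. apply sumR_ext. intros. ring. }
    rewrite !sumR_minus.
    rewrite (sumR_swap r r (fun i j => inner (psi i) f * inner (e j) (psi i) * inner (e j) h)).
    rewrite (sumR_ext r (fun j => sumR r (fun i => inner (psi i) f * inner (e j) (psi i) * inner (e j) h))
      (fun i => sumR r (fun j => inner (psi j) (e i) * inner (psi j) f * inner (e i) h))).
    - ring.
    - intros. apply sumR_ext. intros. rewrite (inner_sym _ (e _)). ring. }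
  assert (HF2 : 0 <= F2).
  { apply sumR_nonneg. intros. apply inner_pos. }
  assert (HG2 : sumR r (fun j => inner (v j) (v j)) = F2).
  { symmetry. apply FG_eq; auto. }
  pose proof (inner_pos _ f) as Pf.
  assert (HX : inner Xv Xv <= F2 * inner f f).
  { assert (E1 : inner Xv Xv = sumR r (fun k => (inner (w k) f)^2)).
    { unfold Xv at 1. rewrite inner_lin_l. apply sumR_ext. intros k Hk.
      unfold Xv. rewrite inner_lin_r.
      rewrite (sumR_ext r _ (fun l => inner (w l) f * (if Nat.eqb k l then 1 else 0)))
        by (intros; rewrite He by auto; ring).
      rewrite sumR_delta' by auto. ring. }
    rewrite E1. unfold F2. rewrite <- sumR_mult_r. apply sumR_le. intros k Hk.
    apply inner_CS. }
  assert (HY : inner Yv Yv <= F2 * inner f f).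
  { assert (E1 : inner Yv Yv = sumR r (fun j => inner (psi j) f * inner (v j) Yv)).
    { unfold Yv at 1. apply inner_lin_l. }
    pose proof (sumR_CS r (fun j => inner (psi j) f) (fun j => inner (v j) Yv)) as CS.
    cbv beta in CS. rewrite <- E1 in CS.
    assert (B1 : sumR r (fun j => (inner (psi j) f)^2) <= inner f f) by (apply bessel_on; exact Hp).
    assert (B2 : sumR r (fun j => (inner (v j) Yv)^2) <= F2 * inner Yv Yv).
    { rewrite <- HG2, <- sumR_mult_r. apply sumR_le. intros. apply inner_CS. }
    pose proof (inner_pos _ Yv) as PY.
    assert (B3 : 0 <= sumR r (fun j => (inner (v j) Yv)^2)) by (apply sumR_nonneg; intros; apply pow2_ge_0).
    assert (B4 : (inner Yv Yv)^2 <= inner f f * (F2 * inner Yv Yv)).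
    { apply (Rle_trans _ _ _ CS). apply Rmult_le_compat; try lra.
      apply sumR_nonneg; intros; apply pow2_ge_0. }
    destruct (Req_dec (inner Yv Yv) 0) as [Z|NZ]; [rewrite Z; nra|].
    apply (Rmult_le_reg_r (inner Yv Yv)); [lra|]. nra. }
  assert (HDD : inner D D = inner Xv Xv - 2 * inner Xv Yv + inner Yv Yv).
  { rewrite HD, (inner_sym _ Xv D), (inner_sym _ Yv D), !HD, (inner_sym _ Yv Xv). ring. }
  pose proof (inner_CS _ Xv Yv) as CS.
  pose proof (inner_pos _ Xv). pose proof (inner_pos _ Yv).
  assert ((inner Xv Yv)^2 <= (F2 * inner f f)^2).
  { apply (Rle_trans _ _ _ CS). replace ((F2 * inner f f)^2) with ((F2 * inner f f) * (F2 * inner f f)) by ring.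
    apply Rmult_le_compat; lra. }
  assert (0 <= F2 * inner f f) by nra.
  assert (- inner Xv Yv <= F2 * inner f f) by nra.
  rewrite HDD. nra.
Qed.

Lemma hs_change N r (e psi : nat -> E) (T : E -> E) : onr r psi ->
  (forall u v, inner (T u) v = inner (T v) u) ->
  (forall u, inner (T u) (T u) = sumR N (fun l => (inner (e l) (T u))^2)) ->
  sumR r (fun j => inner (T (psi j)) (T (psi j))) <= sumR N (fun k => inner (T (e k)) (T (e k))).
Proof.
  intros Hp Hs HP.
  rewrite (sumR_ext r _ (fun j => sumR N (fun l => (inner (e l) (T (psi j)))^2))) by (intros; apply HP).
  rewrite sumR_swap. apply sumR_le. intros l Hl.
  rewrite (sumR_ext r _ (fun j => (inner (psi j) (T (e l)))^2)).
  - apply bessel_on. exact Hp.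
  - intros j Hj. rewrite (inner_sym _ (e l)), Hs, inner_sym. reflexivity.
Qed.

End Gen.

Lemma L_quad (E : InnerProductSpace) (X : Type) (Phi : X -> E) n z w :
  inner (L_op Phi n z w) w = / INR n * sumR n (fun i => (inner w (Phi (z i)))^2).
Proof.
  rewrite L_form. f_equal. apply sumR_ext. intros. rewrite (inner_sym _ (Phi _)). ring.
Qed.

Lemma Exp_L (E : InnerProductSpace) (X : Type) (Phi : X -> E) (e : nat -> E) N n z :
  (forall i, (i < n)%nat -> forall h, inner (Phi (z i)) h = sumR N (fun l => inner (e l) (Phi (z i)) * inner (e l) h)) ->
  forall u h, inner (L_op Phi n z u) h = sumR N (fun l => inner (e l) (L_op Phi n z u) * inner (e l) h).
Proof.
  intros HE u h. rewrite L_form.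
  rewrite (sumR_ext N _ (fun l => / INR n * sumR n (fun i => inner u (Phi (z i)) * (inner (Phi (z i)) (e l) * inner (e l) h)))).
  - rewrite sumR_mult_l, sumR_swap. f_equal. apply sumR_ext. intros i Hi.
    rewrite HE by auto. rewrite <- sumR_mult_l. apply sumR_ext. intros. rewrite (inner_sym _ (e _)). ring.
  - intros l Hl. rewrite inner_sym, L_form, Rmult_assoc, <- sumR_mult_r. f_equal. apply sumR_ext.
    intros. ring.
Qed.

Lemma L_sym (E : InnerProductSpace) (X : Type) (Phi : X -> E) n z u v :
  inner (L_op Phi n z u) v = inner (L_op Phi n z v) u.
Proof.
  rewrite !L_form. f_equal. apply sumR_ext. intros. rewrite !(inner_sym _ (Phi _)). ring.
Qed.

(* Indices are 0-based: x_1..x_N = x 0 .. x (N-1), lambda_k = lam (k-1), etc. *)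
Theorem theorem5 (X : Type) (kappa : X -> X -> R) (E : InnerProductSpace)
  (Phi : X -> E) (N m r : nat) (x xh : nat -> X)
  (lam : nat -> R) (V : nat -> nat -> R) (lamh : nat -> R) (U : nat -> nat -> R) :
  psd_kernel kappa ->
  (forall z, kappa z z <= 1) ->
  (forall z w, inner (Phi z) (Phi w) = kappa z w) ->
  pos_def N (gram kappa x) ->
  sorted_eigendecomp N (gram kappa x) lam V ->
  (forall j, (j < m)%nat -> exists i, (i < N)%nat /\ xh j = x i) ->
  sorted_eigendecomp m (gram kappa xh) lamh U ->
  (1 <= r)%nat -> (r < N)%nat -> (r <= m)%nat ->
  0 < lamh (r - 1)%nat ->
  let phi := eigfun Phi N x lam V in
  let phih := eigfun Phi m xh lamh U in
  let eps := hs_norm phi N (fun f => vsub (L_op Phi N x f) (L_op Phi m xh f)) in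
  let Delta := (lam (r - 1)%nat - lam r) / INR N in
  Delta > 3 * eps ->
  op_norm_le (fun f => vsub (proj_op phi r f) (proj_op phih r f))
             (4 * eps / (Delta - eps)) /\
  4 * eps / (Delta - eps) <= 6 * eps / Delta.
Proof.
  intros Hpsd Hk1 hPhi Hpd HdecA Hsub HdecB Hr1 HrN Hrm Hlr phi phih eps Delta HD.
  set (T := fun f => vsub (L_op Phi N x f) (L_op Phi m xh f)).
  assert (HlamA : forall k, (k < N)%nat -> 0 < lam k).
  { intros k Hk. exact (lam_pos X kappa N x lam V HdecA k Hpd Hk). }
  assert (HsA := HdecA). destruct HsA as [_ [_ HsA]].
  assert (HsB := HdecB). destruct HsB as [_ [_ HsB]].
  assert (HlamB : forall j, (j < r)%nat -> 0 < lamh j).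
  { intros j Hj. apply Rlt_le_trans with (lamh (r - 1)%nat); auto. apply HsB; lia. }
  assert (onA : onr E r phi).
  { intros j l Hj Hl. unfold phi. apply (F3 X kappa E Phi hPhi N x lam V HdecA); auto; try lia;
    apply HlamA; lia. }
  assert (onB : onr E r phih).
  { intros j l Hj Hl. unfold phih. apply (F3 X kappa E Phi hPhi m xh lamh U HdecB); auto; lia. }
  assert (Tsym : forall u v, inner (T u) v = inner (T v) u).
  { intros u v. unfold T. rewrite !inner_vsub_l, (L_sym _ _ _ N x u), (L_sym _ _ _ m xh u). reflexivity. }
  assert (ExpX : forall i, (i < N)%nat -> forall h,
     inner (Phi (x i)) h = sumR N (fun l => inner (phi l) (Phi (x i)) * inner (phi l) h)).
  { intros i Hi h. unfold phi. apply (F8 X kappa E Phi hPhi N x lam V HdecA); auto. }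
  assert (ExpXh : forall j, (j < m)%nat -> forall h,
     inner (Phi (xh j)) h = sumR N (fun l => inner (phi l) (Phi (xh j)) * inner (phi l) h)).
  { intros j Hj h. destruct (Hsub j Hj) as [i [Hi ->]]. apply ExpX; auto. }
  assert (ExpT : forall u h, inner (T u) h = sumR N (fun l => inner (phi l) (T u) * inner (phi l) h)).
  { intros u h. unfold T. rewrite inner_vsub_l.
    rewrite (Exp_L E X Phi phi N N x ExpX u h), (Exp_L E X Phi phi N m xh ExpXh u h), <- sumR_minus.
    apply sumR_ext. intros. rewrite inner_vsub_r. ring. }
  assert (ParT : forall u, inner (T u) (T u) = sumR N (fun l => (inner (phi l) (T u))^2)).
  { intros u. rewrite ExpT. apply sumR_ext. intros. ring. }
  set (HS2 := sumR N (fun i => sumR N (fun j => (inner (phi i) (T (phi j)))^2))).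
  assert (Heps : eps = sqrt HS2) by reflexivity.
  assert (HS2pos : 0 <= HS2).
  { apply sumR_nonneg. intros. apply sumR_nonneg. intros. apply pow2_ge_0. }
  assert (Heps2 : eps ^ 2 = HS2).
  { rewrite Heps. simpl. rewrite Rmult_1_r. apply sqrt_sqrt. exact HS2pos. }
  assert (Heps0 : 0 <= eps) by (rewrite Heps; apply sqrt_pos).
  assert (H1 : sumR N (fun k => inner (T (phi k)) (T (phi k))) = HS2).
  { rewrite (sumR_ext N _ (fun k => sumR N (fun l => (inner (phi l) (T (phi k)))^2))) by (intros; apply ParT).
    rewrite sumR_swap. reflexivity. }
  assert (H2 : sumR r (fun j => inner (T (phih j)) (T (phih j))) <= HS2).
  { rewrite <- H1. apply hs_change; auto. }
  assert (HDpos : 0 < Delta) by lra.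
  set (F2 := sumR r (fun k => inner (resid E r phih (phi k)) (resid E r phih (phi k)))).
  assert (HNpos : 0 < INR N) by (apply lt_0_INR; lia).
  assert (Hmpos : 0 < INR m) by (apply lt_0_INR; lia).
  assert (Key : (Delta / 2) ^ 2 * F2 <= HS2).
  { destruct (Rle_lt_dec ((lam (r - 1)%nat / INR N + lam r / INR N) / 2) (lamh (r - 1)%nat / INR m)) as [C1|C2].
    -
      unfold F2. rewrite FG_eq by auto. rewrite <- sumR_mult_l.
      apply Rle_trans with (2 := H2). apply sumR_le. intros j Hj.
      assert (Hb : lamh (r - 1)%nat / INR m <= lamh j / INR m).
      { unfold Rdiv. apply Rmult_le_compat_r; [left; apply Rinv_0_lt_compat; lra|]. apply HsB; lia. }
      unfold resid.
      apply (sintheta E X Phi N x r phi (fun k => lam k / INR N) (phih j) (lamh j / INR m)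
                      (T (phih j)) (lam r / INR N) (Delta / 2)).
      + exact onA.
      + intros k h Hk. unfold phi. apply (F4 X kappa E Phi hPhi N x lam V HdecA); [lia|apply HlamA; lia].
      + intros h. unfold T. rewrite inner_vsub_l.
        unfold phih. rewrite (F4 X kappa E Phi hPhi m xh lamh U HdecB j h) by (try lia; apply HlamB; lia).
        ring.
      + intros w Hw. rewrite L_quad.
        assert (S : sumR N (fun i => (inner w (Phi (x i)))^2) <= lam r * inner w w).
        { apply (F7 X kappa E Phi hPhi N x lam V HdecA r).
          - apply HlamA; lia.
          - intros; apply HsA; lia.
          - intros; apply HlamA; lia.
          - intros k Hk Hkr. apply Hw. exact Hkr. }
        unfold Rdiv. rewrite (Rmult_comm (lam r)), Rmult_assoc.
        apply Rmult_le_compat_l; [left; apply Rinv_0_lt_compat; lra| exact S].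
      + lra.
      + unfold Delta. unfold Rdiv in *. lra.
    -
      rewrite <- H1. unfold F2. rewrite <- sumR_mult_l.
      apply Rle_trans with (sumR r (fun k => inner (T (phi k)) (T (phi k)))).
      2:{ apply sumR_mono; [lia|]. intros. apply inner_pos. }
      apply sumR_le. intros k Hk.
      assert (Ha : lam (r - 1)%nat / INR N <= lam k / INR N).
      { unfold Rdiv. apply Rmult_le_compat_r; [left; apply Rinv_0_lt_compat; lra|]. apply HsA; lia. }
      replace (inner (T (phi k)) (T (phi k))) with
        (inner (vscal (-1) (T (phi k))) (vscal (-1) (T (phi k))))
        by (rewrite inner_scal_l, inner_scal_r; ring).
      unfold resid.
      apply (sintheta E X Phi m xh r phih (fun j => lamh j / INR m) (phi k) (lam k / INR N)
                      (vscal (-1) (T (phi k))) (lamh (r - 1)%nat / INR m) (Delta / 2)).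
      + exact onB.
      + intros j h Hj. unfold phih. apply (F4 X kappa E Phi hPhi m xh lamh U HdecB); [lia|apply HlamB; lia].
      + intros h. rewrite inner_scal_l. unfold T. rewrite inner_vsub_l.
        unfold phi. rewrite (F4 X kappa E Phi hPhi N x lam V HdecA k h) by (try lia; apply HlamA; lia).
        ring.
      + intros w Hw. rewrite L_quad.
        assert (S : sumR m (fun i => (inner w (Phi (xh i)))^2) <= lamh (r - 1)%nat * inner w w).
        { apply (F7 X kappa E Phi hPhi m xh lamh U HdecB r).
          - exact Hlr.
          - intros; apply HsB; lia.
          - intros; apply HlamB; lia.
          - intros j Hj Hjr. apply Hw. exact Hjr. }
        unfold Rdiv. rewrite (Rmult_comm (lamh _)), Rmult_assoc.
        apply Rmult_le_compat_l; [left; apply Rinv_0_lt_compat; lra| exact S].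
      + lra.
      + unfold Delta. unfold Rdiv in *. lra. }
  assert (HDe : 0 < Delta - eps) by lra.
  set (c := 4 * eps / (Delta - eps)).
  assert (Hc0 : 0 <= c).
  { unfold c, Rdiv. apply Rmult_le_pos; [lra| left; apply Rinv_0_lt_compat; lra]. }
  assert (Hce : c * (Delta - eps) = 4 * eps) by (unfold c; field; lra).
  assert (HF2 : 0 <= F2) by (apply sumR_nonneg; intros; apply inner_pos).
  assert (Hc2 : 4 * F2 <= c ^ 2).
  { assert (A1 : (c * (Delta / 2)) ^ 2 >= (c * ((Delta - eps) / 2)) ^ 2).
    { assert (0 <= c * ((Delta - eps) / 2)) by nra.
      assert (c * ((Delta - eps) / 2) <= c * (Delta / 2)) by nra. nra. }
    assert (A2 : (c * ((Delta - eps) / 2)) ^ 2 = 4 * eps ^ 2).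
    { replace (c * ((Delta - eps) / 2)) with (2 * eps) by (field_simplify; nra). ring. }
    assert (A3 : 4 * ((Delta / 2) ^ 2 * F2) <= c ^ 2 * (Delta / 2) ^ 2) by nra.
    assert (A4 : 0 < (Delta / 2) ^ 2) by nra.
    apply (Rmult_le_reg_r ((Delta / 2) ^ 2)); [exact A4|]. nra. }
  split.
  - intros f. unfold norm.
    pose proof (final_bound E r phi phih f onA onB) as FB. cbv zeta in FB. fold F2 in FB.
    pose proof (inner_pos _ f) as Pf.
    assert (FB2 : inner (vsub (proj_op phi r f) (proj_op phih r f)) (vsub (proj_op phi r f) (proj_op phih r f))
                  <= c ^ 2 * inner f f) by nra.
    rewrite <- (sqrt_pow2 c Hc0), <- sqrt_mult_alt by (apply pow2_ge_0).
    apply sqrt_le_1_alt. exact FB2.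
  - apply (Rmult_le_reg_r ((Delta - eps) * Delta)); [nra|].
    replace (4 * eps / (Delta - eps) * ((Delta - eps) * Delta)) with (4 * eps * Delta) by (field; lra).
    replace (6 * eps / Delta * ((Delta - eps) * Delta)) with (6 * eps * (Delta - eps)) by (field; lra).
    nra.
Qed.
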